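(* Let $k$ be a field, $n$ a positive integer, and $\mathcal B\subseteq\{1,\ldots,n\}\times\{1,\ldots,n\}$ such that $(i,i)\in\mathcal B$ for all $i$ and $(i,l)\in\mathcal B$ whenever $(i,j)\in\mathcal B$ and $(j,l)\in\mathcal B$. Then the structural matrix algebra $\mathcal M(\mathcal B,k)$ is a Frobenius algebra if and only if $\mathcal B=(I_1\times I_1)\cup\cdots\cup(I_r\times I_r)$ for some partition $I_1,\ldots,I_r$ of $\{1,\ldots,n\}$. In this case $\mathcal M(\mathcal B,k)\simeq M_{n_1}(k)\times\cdots\times M_{n_r}(k)$, where $n_j=|I_j|$.
   Context: Let $e_{i,j}$ denote the matrix units of $M_n(k)$. The structural matrix algebra associated to $\mathcal B$ is the subalgebra $\mathcal M(\mathcal B,k)=\sum_{(i,j)\in\mathcal B}k e_{i,j}$ of $M_n(k)$, i.e. the matrices whose $(i,j)$-entries vanish for $(i,j)\notin\mathcal B$. A finite dimensional $k$-algebra $A$ is Frobenius if $A\cong A^*$ as left (equivalently right) $A$-modules. *)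

(* Defs.v *)
From HB Require Import structures.
From mathcomp Require Import all_boot all_order all_algebra.
Set Implicit Arguments. Unset Strict Implicit. Unset Printing Implicit Defensive.
Import GRing.Theory.
Local Open Scope ring_scope.

(* Indices {1,...,n} are rendered as 'I_n = {0,...,n-1}. *)

Definition sma (k : fieldType) (n : nat) (B : rel 'I_n) : pred 'M[k]_n :=
  fun A => [forall i, forall j, ~~ B i j ==> (A i j == 0)].
Arguments sma k {n} B.

(* k-linear functionals on the subspace S of M_n(k) (represented by functions
   on the ambient space, which are only looked at on S). *)
Definition lin_functional_on (k : fieldType) (n : nat) (S : pred 'M[k]_n)
  (f : 'M[k]_n -> k) : Prop :=
  (forall x y, x \in S -> y \in S -> f (x + y) = f x + f y) /\
  (forall (c : k) x, x \in S -> f (c *: x) = c * f x).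

(* A subalgebra S of M_n(k) (e.g. a structural matrix algebra) is Frobenius
   iff S is isomorphic to its dual S* = Hom_k(S,k) as left S-modules, where
   S acts on S* by (a . f)(y) = f (y a).  phi x is the functional attached
   to x; phi must be k-linear, S-linear, injective and surjective. *)
Definition Frobenius_sub (k : fieldType) (n : nat) (S : pred 'M[k]_n) : Prop :=
  exists phi : 'M[k]_n -> 'M[k]_n -> k,
    (forall x, x \in S -> lin_functional_on S (phi x)) /\
    [/\ 
        (forall x y z, x \in S -> y \in S -> z \in S ->
           phi (x + y) z = phi x z + phi y z),
        (forall (c : k) x z, x \in S -> z \in S -> phi (c *: x) z = c * phi x z),
        (forall a x y, a \in S -> x \in S -> y \in S ->
           phi (a *m x) y = phi x (y *m a)),
        (forall x, x \in S -> (forall y, y \in S -> phi x y = 0) -> x = 0)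
      & (forall f, lin_functional_on S f ->
           exists2 x, x \in S & forall y, y \in S -> phi x y = f y)].

Definition is_partition (n r : nat) (P : 'I_r -> {set 'I_n}) : Prop :=
  [/\ (forall j, P j != set0),
      (forall j j', j != j' -> [disjoint P j & P j'])
    & (forall i, exists j, i \in P j)].

Definition blocks_rel (n r : nat) (P : 'I_r -> {set 'I_n}) : rel 'I_n :=
  fun i l => [exists j, (i \in P j) && (l \in P j)].

(* k-algebra isomorphism between a subalgebra S of M_n(k) and the product
   M_{sz 1}(k) x ... x M_{sz r}(k), the latter given as dependent functions
   with componentwise operations. *)
Definition alg_iso_prod (k : fieldType) (n r : nat) (S : pred 'M[k]_n)
  (sz : 'I_r -> nat) : Prop :=
  exists f : 'M[k]_n -> forall j : 'I_r, 'M[k]_(sz j),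
    (forall x y, x \in S -> y \in S -> forall j, f (x + y) j = f x j + f y j) /\
    [/\ 
        (forall (c : k) x, x \in S -> forall j, f (c *: x) j = c *: f x j),
        (forall x y, x \in S -> y \in S -> forall j, f (x *m y) j = f x j *m f y j),
        (forall j, f 1%:M j = 1%:M),
        (forall x y, x \in S -> y \in S -> (forall j, f x j = f y j) -> x = y)
      & (forall g : forall j : 'I_r, 'M[k]_(sz j),
           exists2 x, x \in S & forall j, f x j = g j)].

(* Main.v *)
Require Import Defs.
From mathcomp Require Import all_boot all_order all_algebra.
Set Implicit Arguments. Unset Strict Implicit. Unset Printing Implicit Defensive.
Import GRing.Theory.
Local Open Scope ring_scope.

Section Basics.
Variables (k : fieldType) (n : nat) (B : rel 'I_n).

Lemma smaP (x : 'M[k]_n) : reflect (forall i j, ~~ B i j -> x i j = 0) (x \in sma k B).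
Proof.
rewrite unfold_in /sma; apply: (iffP forallP) => [H i j nB|H i].
  by have /forallP/(_ j)/implyP/(_ nB)/eqP := H i.
by apply/forallP => j; apply/implyP => nB; rewrite H.
Qed.

Lemma sma0 : (0 : 'M[k]_n) \in sma k B.
Proof. by apply/smaP => i j _; rewrite mxE. Qed.

Lemma smaD x y : x \in sma k B -> y \in sma k B -> x + y \in sma k B.
Proof. by move=> /smaP Hx /smaP Hy; apply/smaP => i j nB; rewrite mxE Hx ?Hy ?addr0. Qed.

Lemma smaZ (c : k) x : x \in sma k B -> c *: x \in sma k B.
Proof. by move=> /smaP Hx; apply/smaP => i j nB; rewrite mxE Hx ?mulr0. Qed.

Lemma sma_delta i j : B i j -> delta_mx i j \in sma k B.
Proof.
move=> Bij; apply/smaP => a b nB; rewrite mxE.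
by case: eqP => [ea|//]; case: eqP => [eb|//]; move: nB; rewrite ea eb Bij.
Qed.

Lemma sma_sum (I : Type) (r : seq I) (P : pred I) (F : I -> 'M[k]_n) :
  (forall i, P i -> F i \in sma k B) -> \sum_(i <- r | P i) F i \in sma k B.
Proof. by move=> H; apply: (big_ind (fun x => x \in sma k B)) => //; [exact: sma0|exact: smaD]. Qed.

Lemma lin_sum (f : 'M[k]_n -> k) (I : Type) (r : seq I) (P : pred I) (F : I -> 'M[k]_n) :
  lin_functional_on (sma k B) f ->
  (forall i, P i -> F i \in sma k B) ->
  f (\sum_(i <- r | P i) F i) = \sum_(i <- r | P i) f (F i).
Proof.
move=> [fD fZ] H; elim: r => [|x r IH].
  by rewrite !big_nil -(scale0r (0 : 'M[k]_n)) fZ ?mul0r ?sma0.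
rewrite !big_cons; case: ifP => Px //.
by rewrite fD ?IH // ?H // sma_sum.
Qed.

Lemma lin_expand (f : 'M[k]_n -> k) y :
  lin_functional_on (sma k B) f -> y \in sma k B ->
  f y = \sum_(a < n) \sum_(b < n) y a b * f (delta_mx a b).
Proof.
move=> lf /smaP Hy; rewrite {1}(matrix_sum_delta y) lin_sum //; last first.
  by move=> a _; apply: sma_sum => b _; case: (boolP (B a b)) => Bab;
    [rewrite smaZ ?sma_delta | rewrite Hy // scale0r sma0].
apply: eq_bigr => a _; rewrite lin_sum //; last first.
  by move=> b _; case: (boolP (B a b)) => Bab;
    [rewrite smaZ ?sma_delta | rewrite Hy // scale0r sma0].
apply: eq_bigr => b _; case: (boolP (B a b)) => Bab.
  by rewrite (proj2 lf) // sma_delta.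
by rewrite Hy // scale0r mul0r -(scale0r (0 : 'M[k]_n)) (proj2 lf) ?mul0r ?sma0.
Qed.

End Basics.
Section Sym.
Variables (k : fieldType) (n : nat) (B : rel 'I_n).
Hypothesis Bsym : forall i j, B i j -> B j i.

Lemma tr_delta_mul i j (x : 'M[k]_n) : \tr (delta_mx j i *m x) = x i j.
Proof.
rewrite /mxtrace (bigD1 j) //= big1 ?addr0.
  rewrite mxE (bigD1 i) //= big1 ?addr0; first by rewrite mxE !eqxx mul1r.
  by move=> l nl; rewrite mxE eqxx (negbTE nl) mul0r.
move=> c nc; rewrite mxE big1 // => l _; rewrite mxE (negbTE nc) mul0r //.
Qed.

Lemma tr_expand (y x : 'M[k]_n) : \tr (y *m x) = \sum_(a < n) \sum_(b < n) y a b * x b a.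
Proof. by apply: eq_bigr => a _; rewrite mxE. Qed.

Lemma frob_of_sym : Frobenius_sub (sma k B).
Proof.
exists (fun x y => \tr (y *m x)); split.
  by move=> x _; split => [y z _ _|c y _]; rewrite ?mulmxDl ?mxtraceD // -scalemxAl mxtraceZ.
split.
- by move=> x y z _ _ _; rewrite mulmxDr mxtraceD.
- by move=> c x z _ _; rewrite -scalemxAr mxtraceZ.
- by move=> a x y _ _ _; rewrite mulmxA.
- move=> x /smaP Hx H; apply/matrixP => i j; rewrite mxE.
  case: (boolP (B i j)) => Bij; last by rewrite Hx.
  by rewrite -tr_delta_mul H // sma_delta // Bsym.
- move=> f lf.
  exists (\matrix_(a, b) if B b a then f (delta_mx b a) else 0).
    apply/smaP => a b nB; rewrite mxE; case: ifP => // Bba.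
    by move: nB; rewrite Bsym.
  move=> y yS; rewrite (lin_expand lf yS) tr_expand; apply: eq_bigr => a _.
  apply: eq_bigr => b _; rewrite mxE; case: ifP => // nB.
  by move/smaP: yS => ->; rewrite ?nB // !mul0r.
Qed.

End Sym.
Section Deg.
Variables (k : fieldType) (n : nat) (B : rel 'I_n).
Hypothesis Brefl : forall i, B i i.
Hypothesis Btrans : forall i j l, B i j -> B j l -> B i l.

Lemma sma1 : (1%:M : 'M[k]_n) \in sma k B.
Proof.
apply/smaP => i j nB; rewrite mxE; case: eqP => // eij.
by move: nB; rewrite eij Brefl.
Qed.

Lemma smaM (x y : 'M[k]_n) : x \in sma k B -> y \in sma k B -> x *m y \in sma k B.
Proof.
move=> /smaP Hx /smaP Hy; apply/smaP => i j nB; rewrite mxE big1 // => l _.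
case: (boolP (B i l)) => Bil; last by rewrite Hx ?mul0r.
case: (boolP (B l j)) => Blj; last by rewrite Hy ?mulr0.
by move: nB; rewrite (Btrans Bil Blj).
Qed.

Lemma delta_mul_entry (a q : 'I_n) (w : 'M[k]_n) (a' b : 'I_n) :
  (delta_mx a q *m w) a' b = (a' == a)%:R * w q b.
Proof.
rewrite mxE (bigD1 q) //= big1 ?addr0.
  by rewrite mxE eqxx andbT.
by move=> l nl; rewrite mxE (negbTE nl) andbF mul0r.
Qed.

Lemma frob_deg : Frobenius_sub (sma k B) ->
  forall q, (#|[set a | B a q]| <= #|[set b | B q b]|)%N.
Proof.
move=> [phi [_ [pD pZ pM _ psurj]]] q.
pose t z := phi z 1%:M.
have tlin : lin_functional_on (sma k B) t.
  by split => [x y xS yS|c x xS]; rewrite /t ?pD ?pZ ?sma1.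
have phit x y : x \in sma k B -> y \in sma k B -> phi x y = t (y *m x).
  by move=> xS yS; rewrite /t pM ?sma1 // mul1mx.
have ex_x (p : 'I_n) : exists x : 'M[k]_n, (x \in sma k B) /\
    (forall y, y \in sma k B -> phi x y = y p q).
  have lf : lin_functional_on (sma k B) (fun y : 'M[k]_n => y p q).
    by split => [x y _ _|c x _]; rewrite mxE.
  by have [x xS Hx] := psurj _ lf; exists x.
have [xf Hxf] := fin_all_exists ex_x.
pose w (p : 'I_n) := delta_mx q q *m xf p.
have wS (p : 'I_n) : w p \in sma k B.
  by rewrite smaM ?sma_delta //; case: (Hxf p).
have wP (p : 'I_n) (y : 'M[k]_n) : y \in sma k B -> phi (w p) y = y p q.
  move=> yS; rewrite pM ?sma_delta //; last by case: (Hxf p).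
  case: (Hxf p) => _ H.
  rewrite H; last by rewrite smaM ?sma_delta.
  rewrite mxE (bigD1 q) //= big1 ?addr0; first by rewrite mxE !eqxx mulr1.
  by move=> l nl; rewrite mxE (negbTE nl) mulr0.
pose tau (a b : 'I_n) := t (delta_mx a b).
have key (a p : 'I_n) : B a q -> \sum_(b < n) w p q b * tau a b = (a == p)%:R.
  move=> Baq.
  have S1 : delta_mx a q *m w p \in sma k B by rewrite smaM ?sma_delta.
  have H := wP p _ (sma_delta k Baq).
  rewrite phit ?sma_delta // (lin_expand tlin S1) in H.
  rewrite (bigD1 a) //= [X in _ + X = _]big1 ?addr0 in H; last first.
    move=> a' na; apply: big1 => b _; rewrite delta_mul_entry (negbTE na).
    by rewrite !mul0r.
  rewrite mxE eqxx andbT in H; rewrite eq_sym.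
  rewrite -H; apply: eq_bigr => b _; by rewrite [in RHS]delta_mul_entry eqxx mul1r.
set Dn := [set a | B a q]; set Up := [set b | B q b].
pose Mx : 'M[k]_(#|Dn|, #|Up|) := \matrix_(i, c) tau (enum_val i) (enum_val c).
pose Wx : 'M[k]_(#|Up|, #|Dn|) := \matrix_(c, p) w (enum_val p) q (enum_val c).
have MW : Mx *m Wx = 1%:M.
  apply/matrixP => i p; rewrite !mxE.
  have Bi : B (enum_val i) q by have := enum_valP i; rewrite inE.
  rewrite -(inj_eq enum_val_inj) -(key _ (enum_val p) Bi).
  under eq_bigr do rewrite [Mx _ _]mxE [Wx _ _]mxE mulrC.
  rewrite -(big_enum_val (A := pred_of_set Up) (fun b => w (enum_val p) q b * tau (enum_val i) b)).
  rewrite big_mkcond; apply: eq_bigr => b _; rewrite inE.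
  case: ifP => // nB; move/smaP: (wS (enum_val p)) => ->; by rewrite ?nB ?mul0r.
have := mxrankM_maxr Mx Wx; rewrite MW mxrank1 => H.
exact: leq_trans H (rank_leq_row Wx).
Qed.

End Deg.
Section Comb.
Variables (n : nat) (B : rel 'I_n).
Hypothesis Brefl : forall i, B i i.
Hypothesis Btrans : forall i j l, B i j -> B j l -> B i l.
Hypothesis Bdeg : forall q, (#|[set a | B a q]| <= #|[set b | B q b]|)%N.

Lemma sym_of_deg i j : B i j -> B j i.
Proof.
move=> Bij; apply/negPn/negP => nBji.
pose Q := fun l => B i l && ~~ B l i.
have Qj : Q j by rewrite /Q Bij.
case: (@arg_minnP _ j Q (fun l => #|[set b | B l b]|) Qj) => m /andP[Bim nBmi] Hmin.
have sub : [set b | B m b] \proper [set a | B a m].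
  apply/properP; split; last by exists i; rewrite !inE ?Bim.
  apply/subsetP => l; rewrite !inE => Bml; apply/negPn/negP => nBlm.
  have Ql : Q l.
    rewrite /Q (Btrans Bim Bml) /=; apply/negP => Bli.
    by move: nBlm; rewrite (Btrans Bli Bim).
  have := Hmin l Ql; apply/negP; rewrite -ltnNge; apply: proper_card.
  apply/properP; split; last by exists m; rewrite !inE ?Brefl.
  by apply/subsetP => x; rewrite !inE; apply: Btrans.
by have := proper_card sub; rewrite ltnNge Bdeg.
Qed.

End Comb.
Section Part.
Variables (n : nat) (B : rel 'I_n).
Hypothesis Brefl : forall i, B i i.
Hypothesis Btrans : forall i j l, B i j -> B j l -> B i l.
Hypothesis Bsym : forall i j, B i j -> B j i.

Lemma part_of_equiv : exists r (P : 'I_r -> {set 'I_n}), is_partition P /\ B =2 blocks_rel P.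
Proof.
have eqi : {in [set: 'I_n] & &, equivalence_rel B}.
  move=> x y z _ _ _; split => [|Bxy]; first exact: Brefl.
  apply/idP/idP => H; [exact: Btrans (Bsym Bxy) H | exact: Btrans Bxy H].
pose PP := equivalence_partition B [set: 'I_n].
have /and3P[/eqP covP tiP set0P] := equivalence_partitionP eqi.
have pbB := pblock_equivalence_partition eqi.
have tiP' := tiP; move/trivIsetP: tiP' => tiPP.
exists #|PP|, (fun j => enum_val j); split; first split.
- move=> j; apply/negP => /eqP e; have := enum_valP j; rewrite e.
  by move: set0P; rewrite /PP => /negP H /H.
- move=> j j' njj'; apply: tiPP; try exact: enum_valP.
  by apply: contra njj' => /eqP /enum_val_inj ->.
- move=> i; have ci : i \in cover PP by rewrite covP inE.
  have Pi := pblock_mem ci.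
  exists (enum_rank_in Pi (pblock PP i)); rewrite enum_rankK_in //.
  by rewrite mem_pblock.
move=> i l; apply/idP/existsP => [Bil|[j /andP[ij lj]]].
  have ci : i \in cover PP by rewrite covP inE.
  have Pi := pblock_mem ci.
  exists (enum_rank_in Pi (pblock PP i)); rewrite enum_rankK_in //.
  by rewrite mem_pblock ci /= pbB ?inE.
rewrite -pbB ?inE // (def_pblock tiP (enum_valP j) ij) //.
Qed.

End Part.
Section Iso.
Variables (k : fieldType) (n r : nat) (P : 'I_r -> {set 'I_n}) (B : rel 'I_n).
Hypothesis Ppart : is_partition P.
Hypothesis BP : B =2 blocks_rel P.

Lemma blk_uniq i j j' : i \in P j -> i \in P j' -> j = j'.
Proof.
case: Ppart => _ dis _ ij ij'; apply/eqP/negP => /negP njj.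
by have := disjointFr (dis _ _ njj) ij; rewrite ij'.
Qed.

Lemma B_in i l j : B i l -> i \in P j -> l \in P j.
Proof.
rewrite BP => /existsP[j' /andP[ij' lj']] ij.
by rewrite (blk_uniq ij ij').
Qed.

Lemma iso_part : alg_iso_prod (sma k B) (fun j => #|P j|).
Proof.
pose f (x : 'M[k]_n) : forall j : 'I_r, 'M[k]_(#|P j|) :=
  fun j => \matrix_(a, b) x (enum_val a) (enum_val b).
exists f; split; first by move=> x y _ _ j; apply/matrixP => a b; rewrite !mxE.
split.
- by move=> c x _ j; apply/matrixP => a b; rewrite !mxE.
- move=> x y /smaP xS _ j; apply/matrixP => a b; rewrite !mxE.
  rewrite (bigID (fun l => l \in P j)) /= [X in _ + X]big1 ?addr0; last first.
    move=> l nl; case: (boolP (B (enum_val a) l)) => Bal; last by rewrite xS ?mul0r.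
    by move: nl; rewrite (B_in Bal (enum_valP a)).
  rewrite (big_enum_val (A := pred_of_set (P j))
    (fun l => x (enum_val a) l * y l (enum_val b))).
  by apply: eq_bigr => c _; rewrite !mxE.
- by move=> j; apply/matrixP => a b; rewrite !mxE (inj_eq enum_val_inj).
- move=> x y /smaP xS /smaP yS H; apply/matrixP => i l.
  case: (boolP (B i l)) => Bil; last by rewrite xS ?yS.
  have := Bil; rewrite BP => /existsP[j /andP[ij lj]].
  have := H j => /matrixP /(_ (enum_rank_in ij i) (enum_rank_in ij l)).
  by rewrite !mxE !enum_rankK_in.
- move=> g.
  exists (\matrix_(i, l) \sum_j \sum_(a | enum_val a == i)
            \sum_(b | enum_val b == l) g j a b).
    apply/smaP => i l nB; rewrite mxE big1 // => j _.
    apply: big1 => a /eqP ea; apply: big1 => b /eqP eb.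
    move: nB; rewrite BP => /existsP; case; exists j.
    by rewrite -ea -eb !enum_valP.
  move=> j; apply/matrixP => a' b'; rewrite !mxE (bigD1 j) //= [X in _ + X]big1 ?addr0.
    rewrite (big_pred1 a'); last by move=> a /=; rewrite (inj_eq enum_val_inj).
    by rewrite (big_pred1 b') // => b /=; rewrite (inj_eq enum_val_inj).
  move=> j' nj; apply: big1 => a /eqP ea.
  have Pja : enum_val a \in P j by rewrite ea enum_valP.
  by case/negP: nj; apply/eqP; exact: blk_uniq (enum_valP a) Pja.
Qed.

End Iso.

Theorem mainTheorem2 (k : fieldType) (n : nat) (B : rel 'I_n) :
  (0 < n)%N ->
  (forall i, B i i) ->
  (forall i j l, B i j -> B j l -> B i l) ->
  (Frobenius_sub (sma k B) <->
     exists r (P : 'I_r -> {set 'I_n}), is_partition P /\ B =2 blocks_rel P)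
  /\
  (forall r (P : 'I_r -> {set 'I_n}), is_partition P -> B =2 blocks_rel P ->
     alg_iso_prod (sma k B) (fun j => #|P j|)).
Proof.
move=> _ Brefl Btrans; split; last by move=> r P Pp BP; exact: iso_part.
split => [Hf|[r [P [Pp BP]]]].
  have Bsym := sym_of_deg Brefl Btrans (frob_deg Brefl Btrans Hf).
  exact: part_of_equiv.
apply: frob_of_sym => i j; rewrite !BP => /existsP[l /andP[a b]].
by apply/existsP; exists l; rewrite a b.
Qed.
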